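(* Let $\mathbf{H}_1,\mathbf{H}_2$ be complex Hilbert spaces with $\mathbf{H}_1$ separable with orthonormal basis $(\psi_j)_{j\ge0}$, $H=\mathbf{H}_1\otimes\mathbf{H}_2$, $\mathcal{A}:H\to H$ bounded linear, $\varphi\in H$. Let $y_1,\dots,y_n\in\mathbf{H}_2$ with $\langle y_i,y_j\rangle_2=\delta_{ij}$ and let $k_1,\dots,k_n\in\mathbf{H}_2$ be linearly independent with $\langle k_i,y_j\rangle_2=\delta_{ij}$. Assume $\|\mathcal{A}\mathcal{P}_k\|<1$ and $\tilde{\mathcal{P}}_k\sum_{i=0}^{\infty}(\mathcal{A}\mathcal{P}_k)^i\varphi=0$. Then there exists $\delta>0$ such that for every $\varepsilon$ with $|\varepsilon|<\delta$ and every $\eta_1,\dots,\eta_n\in\mathbf{H}_2$ with $\|\eta_i\|=1$ and $\langle\eta_i,y_j\rangle_2=0$ for all $i,j$, setting $k'_i=k_i+\varepsilon\eta_i$, the series $x':=\sum_{i=0}^{\infty}(\mathcal{A}\mathcal{P}_{k'})^i\varphi$ converges and $\tilde{\mathcal{P}}_{k'}x'=0$. If moreover $k'_1,\dots,k'_n$ are linearly independent, then $x'$ solves $\mathcal{A}x'+\varphi=x'$ subject to the constraints $\langle x',y_i\rangle_{2'}=0$ for $i=1,\dots,n$ (equivalently $\langle x',\psi_j\otimes y_i\rangle=0$ for all $j\ge0$, $1\le i\le n$).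
   Context: $H=\mathbf{H}_1\otimes\mathbf{H}_2$ is the Hilbert tensor product with inner product $\langle\cdot,\cdot\rangle$; $\langle\cdot,\cdot\rangle_1,\langle\cdot,\cdot\rangle_2$ are the inner products of $\mathbf{H}_1,\mathbf{H}_2$ (linear in the first argument). The partial inner product $\langle\cdot,\cdot\rangle_{2'}:H\times\mathbf{H}_2\to\mathbf{H}_1$ is determined by $\langle\langle x,y\rangle_{2'},z\rangle_1=\langle x,z\otimes y\rangle$ for all $x\in H$, $y\in\mathbf{H}_2$, $z\in\mathbf{H}_1$. For $u_1,\dots,u_n\in\mathbf{H}_2$: $\mathcal{P}_u x=x-\sum_{i=1}^n\langle x,y_i\rangle_{2'}\otimes u_i$ and $\tilde{\mathcal{P}}_u x=\sum_{i=1}^n\langle x,y_i\rangle_{2'}\otimes u_i$. $\|\cdot\|$ is the operator norm. *)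

(* Defs.v *)
From mathcomp Require Import all_boot all_order all_algebra.
From mathcomp Require Import classical_sets reals.
From mathcomp Require Export complex.
Set Implicit Arguments. Unset Strict Implicit. Unset Printing Implicit Defensive.
Import Order.TTheory GRing.Theory Num.Theory.
Local Open Scope ring_scope.
Local Open Scope classical_set_scope.

Section Hilbert.
Variables (R : realType) (V : lmodType R[i]) (ip : V -> V -> R[i]).

Definition hnorm (x : V) : R := Num.sqrt (complex.Re (ip x x)).

Definition hconv (u : nat -> V) (l : V) : Prop :=
  forall e : R, 0 < e -> exists N : nat, forall m : nat, (N <= m)%N ->
    hnorm (u m - l) < e.

Definition hcauchy (u : nat -> V) : Prop :=
  forall e : R, 0 < e -> exists N : nat, forall m p : nat,
    (N <= m)%N -> (N <= p)%N -> hnorm (u m - u p) < e.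

Definition hseries (u : nat -> V) (s : V) : Prop :=
  hconv (fun m => \sum_(i < m) u i) s.

Record is_hilbert : Prop := {
  ip_linear : forall (a : R[i]) (x y z : V), ip (a *: x + y) z = a * ip x z + ip y z;
  ip_conjsym : forall x y : V, ip y x = complex.conjc (ip x y);
  ip_pos : forall x : V, 0 <= ip x x;
  ip_definite : forall x : V, ip x x = 0 -> x = 0;
  ip_complete : forall u : nat -> V, hcauchy u -> exists l, hconv u l }.

Definition bounded_linear (T : V -> V) : Prop :=
  (forall (a : R[i]) (x y : V), T (a *: x + y) = a *: T x + T y) /\
  exists M : R, forall x, hnorm (T x) <= M * hnorm x.

Definition opnorm (T : V -> V) : R :=
  sup [set r : R | exists x : V, hnorm x <= 1 /\ r = hnorm (T x)].

End Hilbert.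

Definition lin_indep (R : realType) (V : lmodType R[i]) (n : nat) (k : 'I_n -> V) :
  Prop :=
  forall c : 'I_n -> R[i], \sum_(i < n) c i *: k i = 0 -> forall i, c i = 0.

(* Hilbert tensor product H = H1 (x) H2, characterised up to unitary
   isomorphism: a bilinear map tens with <a(x)b, c(x)d> = <a,c>_1 <b,d>_2
   whose range has dense span (equivalently: only 0 is orthogonal to all
   elementary tensors). *)
Definition is_hilbert_tensor (R : realType)
  (H1 : lmodType R[i]) (ip1 : H1 -> H1 -> R[i])
  (H2 : lmodType R[i]) (ip2 : H2 -> H2 -> R[i])
  (H : lmodType R[i]) (ip : H -> H -> R[i]) (tens : H1 -> H2 -> H) : Prop :=
  [/\ forall (a : R[i]) (x x' : H1) (y : H2), tens (a *: x + x') y = a *: tens x y + tens x' y,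
      forall (a : R[i]) (x : H1) (y y' : H2), tens x (a *: y + y') = a *: tens x y + tens x y',
      forall (x x' : H1) (y y' : H2), ip (tens x y) (tens x' y') = ip1 x x' * ip2 y y'
    & forall z : H, (forall (x : H1) (y : H2), ip z (tens x y) = 0) -> z = 0].

(* the partial inner product <.,.>_{2'} : H x H2 -> H1, determined by
   < <x,y>_{2'}, z >_1 = < x, z (x) y > *)
Definition is_partial_ip (R : realType)
  (H1 : lmodType R[i]) (ip1 : H1 -> H1 -> R[i])
  (H2 : lmodType R[i]) (H : lmodType R[i]) (ip : H -> H -> R[i])
  (tens : H1 -> H2 -> H) (pip : H -> H2 -> H1) : Prop :=
  forall (x : H) (y : H2) (z : H1), ip1 (pip x y) z = ip x (tens z y).

Definition Ptilde (R : realType) (H1 H2 H : lmodType R[i])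
  (tens : H1 -> H2 -> H) (pip : H -> H2 -> H1) (n : nat) (y u : 'I_n -> H2) (x : H) : H :=
  \sum_(i < n) tens (pip x (y i)) (u i).

Definition Pu (R : realType) (H1 H2 H : lmodType R[i])
  (tens : H1 -> H2 -> H) (pip : H -> H2 -> H1) (n : nat) (y u : 'I_n -> H2) (x : H) : H :=
  x - Ptilde tens pip y u x.

Definition neumann_term (R : realType) (H1 H2 H : lmodType R[i])
  (tens : H1 -> H2 -> H) (pip : H -> H2 -> H1) (n : nat) (y u : 'I_n -> H2)
  (A : H -> H) (phi : H) (i : nat) : H :=
  iter i (fun x => A (Pu tens pip y u x)) phi.

(* Main.v *)
Require Import Defs.
From mathcomp Require Import all_boot all_order all_algebra.
From mathcomp Require Import classical_sets reals.
From mathcomp Require Import complex.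
From mathcomp Require Import ring lra.
Import Order.TTheory GRing.Theory Num.Theory.
Local Open Scope ring_scope.
Local Open Scope complex_scope.

Lemma ReD (R : realType) (x y : R[i]) : complex.Re (x + y) = complex.Re x + complex.Re y.
Proof. by case: x; case: y. Qed.
Lemma ReMr (R : realType) (r : R) (x : R[i]) : complex.Re (r%:C * x) = r * complex.Re x.
Proof. by case: x => a b /=; rewrite mul0r subr0. Qed.
Lemma ReJ (R : realType) (x : R[i]) : complex.Re (conjc x) = complex.Re x.
Proof. by case: x. Qed.
Lemma Re0 (R : realType) : complex.Re (0 : R[i]) = 0. Proof. by []. Qed.
Lemma ReM_ge0 (R : realType) (x y : R[i]) : 0 <= x -> 0 <= y ->
  complex.Re (x * y) = complex.Re x * complex.Re y.
Proof.
move=> hx hy; have ix := ger0_Im hx; have iy := ger0_Im hy.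
by move: x y hx hy ix iy => [a b] [c d] _ _ /= -> ->; rewrite mul0r subr0.
Qed.
Lemma Re_ge0 (R : realType) (x : R[i]) : 0 <= x -> 0 <= complex.Re x.
Proof. by rewrite lecE => /andP[]. Qed.
Lemma Re_eq0 (R : realType) (x : R[i]) : 0 <= x -> complex.Re x = 0 -> x = 0.
Proof. move=> hx; have := ger0_Im hx; by move: x hx => [a b] _ /= -> ->. Qed.
Lemma conjc_realC (R : realType) (r : R) : conjc (r%:C) = r%:C.
Proof. by rewrite /= oppr0. Qed.

Section Hilb.
Variables (R : realType) (V : lmodType R[i]) (ip : V -> V -> R[i]).
Hypothesis hV : is_hilbert ip.
Local Notation nrm := (hnorm ip).
Local Notation Q x y := (complex.Re (ip x y)).

Lemma ipD x y z : ip (x + y) z = ip x z + ip y z.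
Proof. by rewrite -[x in LHS]scale1r (ip_linear hV) mul1r. Qed.
Lemma ip0 z : ip 0 z = 0.
Proof.
have h := ipD 0 0 z; rewrite addr0 in h.
by apply: (addrI (ip 0 z)); rewrite -h addr0.
Qed.
Lemma ipZ a x z : ip (a *: x) z = a * ip x z.
Proof. by rewrite -[a *: x]addr0 (ip_linear hV) ip0 addr0. Qed.
Lemma ipN x z : ip (- x) z = - ip x z.
Proof. by rewrite -scaleN1r ipZ mulN1r. Qed.
Lemma ipB x y z : ip (x - y) z = ip x z - ip y z.
Proof. by rewrite ipD ipN. Qed.
Lemma ip_sum (I : Type) (r : seq I) (F : I -> V) z :
  ip (\sum_(i <- r) F i) z = \sum_(i <- r) ip (F i) z.
Proof. elim: r => [|a r IH]; rewrite ?big_nil ?ip0 // !big_cons ipD IH //. Qed.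
Lemma ipDr x y z : ip z (x + y) = ip z x + ip z y.
Proof. by rewrite (ip_conjsym hV) ipD rmorphD /= -!(ip_conjsym hV). Qed.
Lemma ipZr a x z : ip z (a *: x) = conjc a * ip z x.
Proof. by rewrite (ip_conjsym hV) ipZ rmorphM /= -!(ip_conjsym hV). Qed.
Lemma ipr0 z : ip z 0 = 0.
Proof. by rewrite (ip_conjsym hV) ip0 conjc0. Qed.

Lemma QC x y : Q x y = Q y x.
Proof. by rewrite (ip_conjsym hV) ReJ. Qed.
Lemma Q_ge0 x : 0 <= Q x x. Proof. exact/Re_ge0/(ip_pos hV). Qed.
Lemma nrm_ge0 x : 0 <= nrm x. Proof. exact: sqrtr_ge0. Qed.
Lemma nrm_sq x : nrm x ^+ 2 = Q x x. Proof. by rewrite sqr_sqrtr // Q_ge0. Qed.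
Lemma nrm0_eq x : nrm x = 0 -> x = 0.
Proof.
move=> h; apply: (ip_definite hV); apply: Re_eq0; first exact: (ip_pos hV).
by rewrite -nrm_sq h expr0n.
Qed.
Lemma nrm0 : nrm 0 = 0. Proof. by rewrite /hnorm ip0 sqrtr0. Qed.

Lemma Q2 r x s y : Q (r%:C *: x + s%:C *: y) (r%:C *: x + s%:C *: y) =
  r ^+ 2 * Q x x + 2 * r * s * Q x y + s ^+ 2 * Q y y.
Proof.
rewrite !ipD !ipDr !ipZ !ipZr !conjc_realC !ReD !ReMr (QC y x); ring.
Qed.

Lemma CS x y : Q x y <= nrm x * nrm y.
Proof.
have [a0|a0] := eqVneq (nrm x) 0.
  by rewrite (nrm0_eq _ a0) ip0 nrm0 mul0r.
have [b0|b0] := eqVneq (nrm y) 0.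
  by rewrite (nrm0_eq _ b0) ipr0 nrm0 mulr0.
have ha : 0 < nrm x by rewrite lt_def a0 nrm_ge0.
have hb : 0 < nrm y by rewrite lt_def b0 nrm_ge0.
have := Q_ge0 ((nrm y)%:C *: x + (- nrm x)%:C *: y).
rewrite Q2 -!nrm_sq => h.
have hab : 0 < nrm x * nrm y by exact: mulr_gt0.
have : nrm x * nrm y * Q x y <= nrm x * nrm y * (nrm x * nrm y) by nra.
by rewrite ler_pM2l.
Qed.

Lemma nrmD x y : nrm (x + y) <= nrm x + nrm y.
Proof.
rewrite /hnorm -[X in _ <= X]ger0_norm ?addr_ge0 ?sqrtr_ge0 //.
rewrite -sqrtr_sqr ler_sqrt ?sqr_ge0 //.
have := Q2 1 x 1 y; rewrite !scale1r => ->.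
have := CS x y; rewrite /hnorm => h.
rewrite sqrrD !sqr_sqrtr ?Q_ge0 //; nra.
Qed.

Lemma nrmZ r x : nrm (r%:C *: x) = `|r| * nrm x.
Proof.
rewrite /hnorm ipZ ipZr conjc_realC mulrA -rmorphM /= ReMr sqrtrM ?sqr_ge0 //.
by rewrite -expr2 sqrtr_sqr.
Qed.
Lemma nrmN x : nrm (- x) = nrm x.
Proof. by rewrite -scaleN1r -(rmorphN1 (real_complex R)) nrmZ normrN1 mul1r. Qed.
Lemma nrmB x y : nrm (x - y) = nrm (y - x).
Proof. by rewrite -nrmN opprB. Qed.
Lemma nrm_sum (I : Type) (r : seq I) (F : I -> V) :
  nrm (\sum_(i <- r) F i) <= \sum_(i <- r) nrm (F i).
Proof.
elim: r => [|a r IH]; rewrite ?big_nil ?nrm0 // !big_cons.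
by apply: le_trans (nrmD _ _) _; rewrite lerD2l.
Qed.
End Hilb.

Arguments ipD {R V ip} hV x y z.
Arguments ip0 {R V ip} hV z.
Arguments ipZ {R V ip} hV a x z.
Arguments ipN {R V ip} hV x z.
Arguments ipB {R V ip} hV x y z.
Arguments ip_sum {R V ip} hV {I} r F z.
Arguments ipDr {R V ip} hV x y z.
Arguments ipZr {R V ip} hV a x z.
Arguments ipr0 {R V ip} hV z.
Arguments QC {R V ip} hV x y.
Arguments Q_ge0 {R V ip} hV x.
Arguments nrm_ge0 {R V} ip x.
Arguments nrm_sq {R V ip} hV x.
Arguments nrm0_eq {R V ip} hV x.
Arguments nrm0 {R V ip} hV.
Arguments CS {R V ip} hV x y.
Arguments nrmD {R V ip} hV x y.
Arguments nrmZ {R V ip} hV r x.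
Arguments nrmN {R V ip} hV x.
Arguments nrmB {R V ip} hV x y.
Arguments nrm_sum {R V ip} hV {I} r F.

Lemma geo_bern (R : realType) (c : R) (N : nat) : 0 <= c -> c < 1 ->
  c ^+ N * (1 + N%:R * (1 - c)) <= 1.
Proof.
move=> c0 c1; elim: N => [|N IH]; first by rewrite expr0 mul0r addr0 mulr1.
rewrite exprS -natr1.
have hN : 0 <= c ^+ N by exact: exprn_ge0.
have hN1 : c ^+ N <= 1 by rewrite exprn_ile1 // ltW.
have h0 : 0 <= (N%:R : R) by exact: ler0n.
have h1 : c * (c ^+ N * (1 + N%:R * (1 - c))) <= c * 1 by rewrite ler_wpM2l.
have h2a : c ^+ N * (1 - c) <= 1 - c by rewrite ler_piMl // subr_ge0 ltW.
have h2 : c * (c ^+ N * (1 - c)) <= c * (1 - c) by rewrite ler_wpM2l.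
have h3 : 0 <= (1 - c) ^+ 2 by exact: sqr_ge0.
nra.
Qed.

Lemma geo_small (R : realType) (c : R) (e : R) : 0 <= c -> c < 1 -> 0 < e ->
  exists N : nat, c ^+ N < e.
Proof.
move=> c0 c1 e0.
have h1c : 0 < 1 - c by rewrite subr_gt0.
set b := (e * (1 - c))^-1.
have b0 : 0 <= b by rewrite invr_ge0 ltW // mulr_gt0.
exists (Num.Def.archi_bound b).
have := archi_boundP b0; set N := Num.Def.archi_bound b => hN.
have hg := @geo_bern _ c N c0 c1.
have hb : b * (e * (1 - c)) = 1 by rewrite mulVf // gt_eqF // mulr_gt0.
have hcN : 0 <= c ^+ N by exact: exprn_ge0.
rewrite ltNge; apply/negP => hle.
have : e * (N%:R * (1 - c)) > 1.
  have : N%:R * (e * (1 - c)) > b * (e * (1 - c)) by rewrite ltr_pM2r // mulr_gt0.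
  rewrite hb; lra.
have : c ^+ N * (N%:R * (1 - c)) >= e * (N%:R * (1 - c)).
  by rewrite ler_pM2r // mulr_gt0 // (le_lt_trans b0 hN).
have : 0 < e by [].
nra.
Qed.

Section Contr.
Variables (R : realType) (V : lmodType R[i]) (ip : V -> V -> R[i]).
Hypothesis hV : is_hilbert ip.
Local Notation nrm := (hnorm ip).
Variable T : V -> V.
Hypothesis Tlin : forall a x y, T (a *: x + y) = a *: T x + T y.
Variable c : R.
Hypotheses (c0 : 0 <= c) (c1 : c < 1) (Tc : forall x, nrm (T x) <= c * nrm x).
Variable phi : V.

Lemma T0 : T 0 = 0.
Proof.
have h := Tlin 1 0 0; rewrite !scale1r addr0 in h.
by apply: (addrI (T 0)); rewrite -h addr0.
Qed.
Lemma TD x y : T (x + y) = T x + T y.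
Proof. by rewrite -[x in LHS]scale1r Tlin scale1r. Qed.
Lemma TB x y : T (x - y) = T x - T y.
Proof. by rewrite addrC -scaleN1r Tlin scaleN1r addrC. Qed.
Lemma Tsum (I : Type) (r : seq I) (F : I -> V) :
  T (\sum_(i <- r) F i) = \sum_(i <- r) T (F i).
Proof. elim: r => [|a r IH]; rewrite ?big_nil ?T0 // !big_cons TD IH //. Qed.

Definition S m := \sum_(i < m) iter i T phi.

Lemma Srec m : S m.+1 = phi + T (S m).
Proof.
rewrite /S big_ord_recl /=; congr (_ + _); rewrite Tsum.
by apply: eq_bigr => i _.
Qed.

Lemma iter_bound m x : nrm (iter m T x) <= c ^+ m * nrm x.
Proof.
elim: m => [|m IH]; first by rewrite expr0 mul1r.
rewrite iterS exprS -mulrA; apply: le_trans (Tc _) _.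
by rewrite ler_wpM2l.
Qed.

Lemma S_bound m : nrm (S m) <= nrm phi / (1 - c).
Proof.
have h1c : 0 < 1 - c by rewrite subr_gt0.
elim: m => [|m IH].
  rewrite /S big_ord0 (nrm0 hV); apply: divr_ge0; [exact: nrm_ge0 | exact: ltW].
rewrite Srec; apply: le_trans (nrmD hV _ _) _.
have := Tc (S m) => h.
have hK : nrm phi / (1 - c) * (1 - c) = nrm phi by rewrite divfK // gt_eqF.
have h2 : c * nrm (S m) <= c * (nrm phi / (1 - c)) by rewrite ler_wpM2l.
move: hK h h2; set K := nrm phi / (1 - c); set a := nrm (S m); set b := nrm (T (S m)).
set p := nrm phi; move=> hK h h2.
lra.
Qed.

Lemma S_shift m j : S (m + j) - S m = iter m T (S j).
Proof.
elim: m => [|m IH]; first by rewrite add0n /S big_ord0 subr0.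
by rewrite addSn !Srec opprD addrACA subrr add0r -TB IH.
Qed.

Lemma S_cauchy : hcauchy ip S.
Proof.
move=> e e0.
set K := nrm phi / (1 - c).
have K0 : 0 <= K by rewrite divr_ge0 ?nrm_ge0 // subr_ge0 ltW.
have eK : 0 < e / (K + 1) by rewrite divr_gt0 // ltr_pwDr.
have [N hN] := @geo_small _ c _ c0 c1 eK.
have key : forall m p, (N <= m)%N -> (m <= p)%N -> nrm (S p - S m) < e.
  move=> m p hm hmp; rewrite -(subnKC hmp) S_shift.
  apply: le_lt_trans (iter_bound _ _) _.
  have h1 : c ^+ m <= c ^+ N by rewrite ler_wiXn2l // ltW.
  have h2 := S_bound (p - m).
  have h3 : c ^+ N * (K + 1) < e.
    by move: hN; rewrite ltr_pdivlMr // ltr_pwDr.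
  have h4 : 0 <= c ^+ m by exact: exprn_ge0.
  have h5 := nrm_ge0 ip (S (p - m)).
  have h6 : 0 <= c ^+ N by exact: exprn_ge0.
  apply: le_lt_trans h3.
  apply: le_trans (_ : c ^+ m * K <= _); first by rewrite ler_wpM2l.
  apply: le_trans (_ : c ^+ N * K <= _); first by rewrite ler_wpM2r.
  by rewrite ler_wpM2l // lerDl.
exists N => m p hm hp.
have [hmp|hpm] := leqP m p; first by rewrite (nrmB hV); exact: key.
exact: key hp (ltnW hpm).
Qed.

Lemma S_limit : exists l, hseries ip (fun i => iter i T phi) l.
Proof. exact: (ip_complete hV) S_cauchy. Qed.

Lemma nrm_small_eq0 z : (forall e, 0 < e -> nrm z < e) -> z = 0.
Proof.
move=> h; apply: (nrm0_eq hV).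
have [//|hz] := eqVneq (nrm z) 0.
have hp : 0 < nrm z by rewrite lt_def hz nrm_ge0.
by have := h _ hp; rewrite ltxx.
Qed.

Lemma limit_fixed l : hseries ip (fun i => iter i T phi) l -> l = phi + T l.
Proof.
move=> hl; apply/eqP; rewrite -subr_eq0; apply/eqP/nrm_small_eq0 => e e0.
have [N hN] := hl (e / 2) (divr_gt0 e0 (ltr0n _ 2)).
have hA := hN N.+1 (leqnSn N); have hB := hN N (leqnn N).
have -> : l - (phi + T l) = (l - S N.+1) + T (S N - l).
  rewrite Srec TB; set a := T (S N); set b := T l.
  by rewrite !opprD !addrA subrK.
apply: le_lt_trans (nrmD hV _ _) _.
rewrite (nrmB hV).
have h1 := Tc (S N - l).
have h2 : c * nrm (S N - l) <= nrm (S N - l) by rewrite ler_piMl ?nrm_ge0 // ltW.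
rewrite /S in hA hB h1 h2 *.
lra.
Qed.

Lemma fixed_conv x : x = phi + T x -> hseries ip (fun i => iter i T phi) x.
Proof.
move=> hx.
have key : forall m, x - S m = iter m T x.
  elim=> [|m IH]; first by rewrite /S big_ord0 subr0.
  by rewrite Srec {1}hx opprD addrACA subrr add0r -TB IH.
move=> e e0.
have hK : 0 < nrm x + 1 by rewrite ltr_pwDr // nrm_ge0.
have [N hN] := @geo_small _ c _ c0 c1 (divr_gt0 e0 hK).
exists N => m hm.
rewrite -/(S m) (nrmB hV) key; apply: le_lt_trans (iter_bound _ _) _.
have h1 : c ^+ m <= c ^+ N by rewrite ler_wiXn2l // ltW.
have h3 : c ^+ N * (nrm x + 1) < e by move: hN; rewrite ltr_pdivlMr.
have h4 : 0 <= c ^+ m by exact: exprn_ge0.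
have h5 := nrm_ge0 ip x.
nra.
Qed.
End Contr.

Arguments T0 {R V T} Tlin.
Arguments TB {R V T} Tlin x y.

Open Scope classical_set_scope.
Section Op.
Variables (R : realType) (V : lmodType R[i]) (ip : V -> V -> R[i]).
Hypothesis hV : is_hilbert ip.
Local Notation nrm := (hnorm ip).
Variable T : V -> V.
Hypothesis Tlin : forall a x y, T (a *: x + y) = a *: T x + T y.
Variable M : R.
Hypothesis hM : forall x, nrm (T x) <= M * nrm x.

Lemma opnorm_bound x : nrm (T x) <= opnorm ip T * nrm x.
Proof.
set E := [set r : R | exists x : V, nrm x <= 1 /\ r = nrm (T x)].
have hs : has_sup E.
  split; first by exists (nrm (T 0)); exists 0; split => //; rewrite (nrm0 hV) ler01.
  exists (Num.max M 0) => r [z [hz ->]].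
  apply: le_trans (hM z) _.
  have hMa : M <= Num.max M 0 by rewrite le_max lexx.
  have hMa0 : 0 <= Num.max M 0 by rewrite le_max lexx orbT.
  apply: le_trans (_ : Num.max M 0 * nrm z <= _).
    by rewrite ler_wpM2r // nrm_ge0.
  by rewrite ler_piMr.
have [x0|x0] := eqVneq (nrm x) 0.
  by rewrite (nrm0_eq hV _ x0) (T0 Tlin) (nrm0 hV) mulr0.
have sp : 0 < nrm x by rewrite lt_def x0 nrm_ge0.
set u := ((nrm x)^-1)%:C *: x.
have hu : nrm u = 1 by rewrite /u (nrmZ hV) ger0_norm ?invr_ge0 ?nrm_ge0 // mulVf.
have hE : E (nrm (T u)) by exists u; rewrite hu.
have h : nrm (T u) <= opnorm ip T by exact: (sup_upper_bound hs) hE.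
have hTu : T u = ((nrm x)^-1)%:C *: T x by rewrite /u -[_ *: x]addr0 Tlin (T0 Tlin) addr0.
move: h; rewrite hTu (nrmZ hV) ger0_norm ?invr_ge0 ?nrm_ge0 // => h.
by rewrite -ler_pdivrMr // mulrC.
Qed.
End Op.
Close Scope classical_set_scope.

Section Main.
Variables (R : realType) (H1 : lmodType R[i]) (ip1 : H1 -> H1 -> R[i]).
Hypothesis hH1 : is_hilbert ip1.
Variables (H2 : lmodType R[i]) (ip2 : H2 -> H2 -> R[i]).
Hypothesis hH2 : is_hilbert ip2.
Variables (H : lmodType R[i]) (ip : H -> H -> R[i]).
Hypothesis hH : is_hilbert ip.
Variable tens : H1 -> H2 -> H.
Hypothesis htens : is_hilbert_tensor ip1 ip2 ip tens.
Variable pip : H -> H2 -> H1.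
Hypothesis hpip : is_partial_ip ip1 ip tens pip.

Lemma tensl a x x' y : tens (a *: x + x') y = a *: tens x y + tens x' y.
Proof. by case: htens. Qed.
Lemma tensr a x y y' : tens x (a *: y + y') = a *: tens x y + tens x y'.
Proof. by case: htens. Qed.
Lemma tens_ip x x' y y' : ip (tens x y) (tens x' y') = ip1 x x' * ip2 y y'.
Proof. by case: htens. Qed.
Lemma tens0l y : tens 0 y = 0.
Proof.
have h := tensl 1 0 0 y; rewrite !scale1r addr0 in h.
by apply: (addrI (tens 0 y)); rewrite -h addr0.
Qed.

Lemma pip_lin a x z y : pip (a *: x + z) y = a *: pip x y + pip z y.
Proof.
apply/eqP; rewrite -subr_eq0; apply/eqP; apply: (ip_definite hH1).
set d := _ - _.
have hw : forall w, ip1 d w = 0.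
  move=> w; rewrite /d (ipB hH1) hpip (ip_linear hH) (ip_linear hH1) !hpip.
  by rewrite subrr.
exact: hw.
Qed.

Lemma nrm_tens a b : hnorm ip (tens a b) = hnorm ip1 a * hnorm ip2 b.
Proof.
rewrite /hnorm tens_ip ReM_ge0 ?(ip_pos hH1) ?(ip_pos hH2) //.
by rewrite sqrtrM // Re_ge0 // (ip_pos hH1).
Qed.

Lemma pip_bound x y : hnorm ip1 (pip x y) <= hnorm ip x * hnorm ip2 y.
Proof.
set p := pip x y.
have h : hnorm ip1 p ^+ 2 <= hnorm ip x * (hnorm ip1 p * hnorm ip2 y).
  by rewrite (nrm_sq hH1) hpip -nrm_tens (CS hH).
have [p0|p0] := eqVneq (hnorm ip1 p) 0.
  by rewrite p0 mulr_ge0 ?nrm_ge0.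
have sp : 0 < hnorm ip1 p by rewrite lt_def p0 nrm_ge0.
by rewrite -(ler_pM2r sp) -expr2 mulrAC -mulrA.
Qed.

Lemma Ptilde_lin n (y u : 'I_n -> H2) a x z :
  Ptilde tens pip y u (a *: x + z) = a *: Ptilde tens pip y u x + Ptilde tens pip y u z.
Proof.
rewrite /Ptilde scaler_sumr -big_split; apply: eq_bigr => i _.
by rewrite pip_lin tensl.
Qed.

Lemma Pu_lin n (y u : 'I_n -> H2) a x z :
  Pu tens pip y u (a *: x + z) = a *: Pu tens pip y u x + Pu tens pip y u z.
Proof. by rewrite /Pu Ptilde_lin scalerBr opprD addrACA. Qed.

Lemma Ptilde_bound n (y u : 'I_n -> H2) x :
  hnorm ip (Ptilde tens pip y u x) <=
  hnorm ip x * \sum_(i < n) hnorm ip2 (y i) * hnorm ip2 (u i).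
Proof.
apply: le_trans (nrm_sum hH _ _) _; rewrite mulr_sumr; apply: ler_sum => i _.
rewrite nrm_tens mulrA ler_wpM2r ?nrm_ge0 //; exact: pip_bound.
Qed.

Lemma Ptilde_dual n (y k : 'I_n -> H2) x :
  (forall i j, ip2 (k i) (y j) = (i == j)%:R) ->
  Ptilde tens pip y k x = 0 -> forall j, pip x (y j) = 0.
Proof.
move=> hd h0 j; apply: (ip_definite hH1).
have hw : forall w, ip1 (pip x (y j)) w = 0.
  move=> w.
  have := congr1 (fun v => ip v (tens w (y j))) h0 => /=.
  rewrite (ip0 hH) /Ptilde (ip_sum hH).
  under eq_bigr do rewrite tens_ip hd.
  rewrite (bigD1 j) //= eqxx mulr1 big1 ?addr0 // => i /negbTE ->.
  by rewrite mulr0.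
exact: hw.
Qed.

Lemma Ptilde_pert n (y k eta : 'I_n -> H2) e x :
  Ptilde tens pip y (fun i => k i + e *: eta i) x =
  Ptilde tens pip y k x + e *: Ptilde tens pip y eta x.
Proof.
rewrite /Ptilde scaler_sumr -big_split; apply: eq_bigr => i _.
by rewrite addrC tensr addrC.
Qed.

Lemma Ptilde_zero n (y u : 'I_n -> H2) x :
  (forall j, pip x (y j) = 0) -> Ptilde tens pip y u x = 0.
Proof. by move=> h; rewrite /Ptilde big1 // => i _; rewrite h tens0l. Qed.
End Main.

Arguments Ptilde_lin {R H1 ip1} hH1 {H2 ip2 H ip} hH {tens} htens {pip} hpip.
Arguments Pu_lin {R H1 ip1} hH1 {H2 ip2 H ip} hH {tens} htens {pip} hpip.
Arguments Ptilde_bound {R H1 ip1} hH1 {H2 ip2} hH2 {H ip} hH {tens} htens {pip} hpip.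
Arguments Ptilde_dual {R H1 ip1} hH1 {H2 ip2 H ip} hH {tens} htens {pip}.
Arguments Ptilde_pert {R H1 ip1 H2 ip2 H ip tens} htens {pip}.
Arguments Ptilde_zero {R H1 ip1 H2 ip2 H ip tens} htens {pip}.
Arguments opnorm_bound {R V ip} hV {T}.



Close Scope complex_scope.

Theorem corollary2 (R : realType)
  (H1 : lmodType R[i]) (ip1 : H1 -> H1 -> R[i]) (hH1 : is_hilbert ip1)
  (psi : nat -> H1)
  (psi_on : forall j l : nat, ip1 (psi j) (psi l) = (j == l)%:R)
  (psi_total : forall x : H1, (forall j, ip1 x (psi j) = 0) -> x = 0)
  (H2 : lmodType R[i]) (ip2 : H2 -> H2 -> R[i]) (hH2 : is_hilbert ip2)
  (H : lmodType R[i]) (ip : H -> H -> R[i]) (hH : is_hilbert ip)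
  (tens : H1 -> H2 -> H) (htens : is_hilbert_tensor ip1 ip2 ip tens)
  (pip : H -> H2 -> H1) (hpip : is_partial_ip ip1 ip tens pip)
  (A : H -> H) (hA : bounded_linear ip A) (phi : H)
  (n : nat) (y k : 'I_n -> H2)
  (y_on : forall i j, ip2 (y i) (y j) = (i == j)%:R)
  (k_indep : lin_indep k)
  (k_dual : forall i j, ip2 (k i) (y j) = (i == j)%:R)
  (hnormAP : opnorm ip (fun x => A (Pu tens pip y k x)) < 1)
  (hx0 : forall x0 : H, hseries ip (neumann_term tens pip y k A phi) x0 ->
           Ptilde tens pip y k x0 = 0) :
  exists2 delta : R, 0 < delta &
    forall (eps : R) (eta : 'I_n -> H2),
      `|eps| < delta ->
      (forall i, hnorm ip2 (eta i) = 1) ->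
      (forall i j, ip2 (eta i) (y j) = 0) ->
      let k' := fun i => k i + (eps%:C)%C *: eta i in
      exists x' : H,
        [/\ hseries ip (neumann_term tens pip y k' A phi) x',
            Ptilde tens pip y k' x' = 0
          & lin_indep k' ->
            [/\ A x' + phi = x',
                forall i, pip x' (y i) = 0
              & forall (j : nat) (i : 'I_n), ip x' (tens (psi j) (y i)) = 0]].
Proof.
case: hA => Alin [M hM].
set Ma := Num.max M 0.
have hMa : M <= Ma by rewrite le_max lexx.
have hMa0 : 0 <= Ma by rewrite le_max lexx orbT.
have hMz : forall z, hnorm ip (A z) <= Ma * hnorm ip z.
  move=> z; apply: le_trans (hM z) _; by rewrite ler_wpM2r // nrm_ge0.
have TlinG : forall u : 'I_n -> H2, forall a x z,
    A (Pu tens pip y u (a *: x + z)) = a *: A (Pu tens pip y u x) + A (Pu tens pip y u z).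
  by move=> u a x z; rewrite (Pu_lin hH1 hH htens hpip) Alin.
set T := fun x => A (Pu tens pip y k x).
have Tlin : forall a x z, T (a *: x + z) = a *: T x + T z := TlinG k.
set Sk := \sum_(i < n) hnorm ip2 (y i) * hnorm ip2 (k i).
have hPu : forall (u : 'I_n -> H2) x, hnorm ip (Pu tens pip y u x) <=
    hnorm ip x + hnorm ip (Ptilde tens pip y u x).
  by move=> u x; rewrite /Pu; apply: le_trans (nrmD hH _ _) _; rewrite (nrmN hH).
have TM : forall x, hnorm ip (T x) <= (Ma * (1 + Sk)) * hnorm ip x.
  move=> x; apply: le_trans (hMz _) _.
  rewrite -mulrA ler_wpM2l //; apply: le_trans (hPu k x) _.
  rewrite mulrDl mul1r lerD2l mulrC.
  exact: (Ptilde_bound hH1 hH2 hH htens hpip).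
set c := Num.max (opnorm ip T) 0.
have c0 : 0 <= c by rewrite le_max lexx orbT.
have c1 : c < 1 by rewrite gt_max hnormAP ltr01.
have Tc : forall x, hnorm ip (T x) <= c * hnorm ip x.
  move=> x; apply: le_trans (opnorm_bound hH Tlin _ TM x) _.
  by rewrite ler_wpM2r ?nrm_ge0 // le_max lexx.
have [x0 hx0s] := @S_limit _ _ _ hH _ Tlin _ c0 c1 Tc phi.
have hPt := hx0 x0 hx0s.
have hpz := Ptilde_dual hH1 hH htens _ _ _ _ k_dual hPt.
have hfix := @limit_fixed _ _ _ hH _ Tlin _ c1 Tc phi x0 hx0s.
have hPz : forall u : 'I_n -> H2, Pu tens pip y u x0 = x0.
  by move=> u; rewrite /Pu (Ptilde_zero htens) // subr0.
set Y := \sum_(i < n) hnorm ip2 (y i).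
have Y0 : 0 <= Y by apply: sumr_ge0 => i _; exact: nrm_ge0.
set B := Ma * Y.
have B0 : 0 <= B by exact: mulr_ge0.
have h1c : 0 < 1 - c by rewrite subr_gt0.
exists ((1 - c) / (2 * (B + 1))).
  by rewrite divr_gt0 // mulr_gt0 // ltr_pwDr.
move=> eps eta heps heta hetay k'.
exists x0; split.
- set T' := fun x => A (Pu tens pip y k' x).
  have T'lin : forall a x z, T' (a *: x + z) = a *: T' x + T' z := TlinG k'.
  set c' := c + `|eps| * B.
  have c'0 : 0 <= c' by rewrite addr_ge0 // mulr_ge0.
  have c'1 : c' < 1.
    have hB1 : 0 < 2 * (B + 1) by rewrite mulr_gt0 // ltr_pwDr.
    have : `|eps| * (2 * (B + 1)) < 1 - c by rewrite -ltr_pdivlMr.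
    have := normr_ge0 eps.
    rewrite /c'; nra.
  have T'c : forall x, hnorm ip (T' x) <= c' * hnorm ip x.
    move=> x; rewrite /T' /k' /Pu (Ptilde_pert htens) opprD addrA -/(Pu tens pip y k x).
    rewrite addrC -scaleNr Alin.
    apply: le_trans (nrmD hH _ _) _.
    rewrite -rmorphN /= (nrmZ hH) normrN mulrDl addrC lerD ?Tc //.
    rewrite -mulrA ler_wpM2l //; apply: le_trans (hMz _) _.
    rewrite /B -mulrA ler_wpM2l // mulrC.
    apply: le_trans (Ptilde_bound hH1 hH2 hH htens hpip _ _ _ _) _.
    rewrite ler_wpM2l ?nrm_ge0 //; apply: ler_sum => i _.
    by rewrite heta mulr1.
  apply: (@fixed_conv _ _ _ hH _ T'lin _ c'0 c'1 T'c phi x0).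
  by rewrite /T' hPz {1}hfix /T hPz.
- exact: (Ptilde_zero htens _ _ _ _ hpz).
- move=> _; split => //.
  + by rewrite {2}hfix /T hPz addrC.
  + move=> j i; rewrite -hpip hpz; exact: (ip0 hH1).
Qed.
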